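(* For every nonzero $Q(X,Y)\in M_{s,\ell}$, $\mathrm{wdeg}_{1,k-1}Q(X,Y)=\mathrm{wdeg}_{1,-1}\varphi(Q(X,Y))+sk$.
   Context: Let $\mathbb F_q$ be a finite field, $1\le k<n<q$, $\alpha_0,\dots,\alpha_{n-1}$ distinct nonzero elements of $\mathbb F_q$, $w_0,\dots,w_{n-1}$ nonzero elements of $\mathbb F_q$, and $r\in\mathbb F_q^n$ a word with $r_i=0$ for $i=0,\dots,k-1$; let $r_i'=r_i/w_i$. For positive integers $s\le\ell$, $M_{s,\ell}$ is the $\mathbb F_q[X]$-module of all $Q\in\mathbb F_q[X,Y]$ of $Y$-degree at most $\ell$ such that for each $i$, $Q(X+\alpha_i,Y+r_i')$ has no monomials of total degree less than $s$. Let $L(X)=\prod_{i=0}^{k-1}(X-\alpha_i)$ and $\varphi(Q)(X,Y)=L(X)^{-s}Q(X,L(X)Y)$ for $Q\in M_{s,\ell}$ (under the assumption on $r$, $\varphi(Q)\in\mathbb F_q[X,Y]$). For integers $u,v$, $\mathrm{wdeg}_{u,v}$ of a nonzero bivariate polynomial is the maximum of $ui+vj$ over its monomials $X^iY^j$. *)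

(* Defs.v *)
(* Bivariate polynomials are {poly {poly F}}:
   outer variable = Y, coefficients are polynomials in X (polyXY convention). *)
From HB Require Import structures.
From mathcomp Require Import all_boot all_order all_algebra.
Set Implicit Arguments. Unset Strict Implicit. Unset Printing Implicit Defensive.
Import Order.TTheory GRing.Theory Num.Theory.
Local Open Scope ring_scope.

Definition wdeg_vals (F : nzRingType) (u v : int) (P : {poly {poly F}}) : seq int :=
  [seq u * (p.2 : nat)%:Z + v * (p.1 : nat)%:Z
    | p <- [seq (j, i) | j <- iota 0 (size P), i <- iota 0 (size P`_j)]
    & (P`_p.1)`_p.2 != 0].

(* wdeg_{u,v} P = max of u*i + v*j over monomials of P (meaningful for P != 0). *)
Definition wdeg (F : nzRingType) (u v : int) (P : {poly {poly F}}) : int :=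
  let s := wdeg_vals u v P in \big[Num.max/head 0 s]_(x <- s) x.

Definition shiftXY (F : comNzRingType) (a b : F) (Q : {poly {poly F}})
  : {poly {poly F}} :=
  (map_poly (fun p : {poly F} => p \Po ('X + a%:P)) Q) \Po ('X + (b%:P)%:P).

Definition mult_ge (F : comNzRingType) (s : nat) (a b : F) (Q : {poly {poly F}}) :=
  forall i j : nat, (i + j < s)%N -> ((shiftXY a b Q)`_j)`_i = 0.

(* Membership in M_{s,l} (with r'_i = r_i / w_i). *)
Definition in_M (F : fieldType) (n s l : nat) (alpha w r : 'I_n -> F)
  (Q : {poly {poly F}}) : Prop :=
  (size Q <= l.+1)%N /\ forall i : 'I_n, mult_ge s (alpha i) (r i / w i) Q.

Definition Lpoly (F : fieldType) (n k : nat) (alpha : 'I_n -> F) : {poly F} :=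
  \prod_(i < n | (i < k)%N) ('X - (alpha i)%:P).

(* phi(Q)(X,Y) = L(X)^{-s} Q(X, L(X) Y): the coefficient of Y^j is
   Q_j(X) L(X)^j / L(X)^s (an exact division under the hypotheses). *)
Definition phi (F : fieldType) (s : nat) (L : {poly F}) (Q : {poly {poly F}})
  : {poly {poly F}} :=
  \poly_(j < size Q) ((Q`_j * L ^+ j) %/ L ^+ s).

(* Main.v *)
Require Import Defs.
From HB Require Import structures.
From mathcomp Require Import all_boot all_order all_algebra all_field.
From mathcomp Require Import zify ring lra.
Import Order.TTheory GRing.Theory Num.Theory.
Local Open Scope ring_scope.

Lemma mem_vals (F : nzRingType) u v (P : {poly {poly F}}) x :
  x \in wdeg_vals u v P <-> exists i j : nat, (P`_j)`_i != 0 /\ x = u * i%:Z + v * j%:Z.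
Proof.
rewrite /wdeg_vals; split.
- case/mapP => [[j i]]; rewrite mem_filter /= => /andP[nz _] ->. by exists i, j.
- case=> i [j [nz ->]]. apply/mapP; exists (j, i) => //. rewrite mem_filter /= nz /=.
  apply/allpairsPdep. exists j, i; split => //; rewrite mem_iota /= add0n.
  + rewrite ltnNge; apply/negP => h; move: nz; by rewrite (nth_default _ h) coef0 eqxx.
  + rewrite ltnNge; apply/negP => h; move: nz; by rewrite nth_default // eqxx.
Qed.

Lemma bigmax_prop (s : seq int) x0 :
  (forall y, y \in s -> y <= \big[Num.max/x0]_(x <- s) x) /\
  (\big[Num.max/x0]_(x <- s) x \in x0 :: s).
Proof.
elim: s => [|a s [IH1 IH2]]; first by rewrite big_nil mem_seq1 eqxx.
rewrite big_cons; split.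
- move=> y; rewrite inE => /orP[/eqP ->|ys]; first by rewrite le_max lexx.
  by rewrite le_max IH1 ?orbT.
- rewrite /Num.max; case: ifP => _; rewrite !inE ?eqxx ?orbT //.
  move: IH2; rewrite inE => /orP[->|->] //; by rewrite ?orbT.
Qed.

Lemma wdeg_spec (F : nzRingType) u v (P : {poly {poly F}}) : P != 0 ->
  wdeg u v P \in wdeg_vals u v P /\
  forall y, y \in wdeg_vals u v P -> y <= wdeg u v P.
Proof.
move=> nzP.
have : exists x, x \in wdeg_vals u v P.
  exists (u * (size P`_(size P).-1).-1%:Z + v * (size P).-1%:Z).
  apply/mem_vals; do 2 eexists; split; last reflexivity.
  have h1 : P`_(size P).-1 != 0 by rewrite -lead_coefE lead_coef_eq0.
  by rewrite -lead_coefE lead_coef_eq0.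
rewrite /wdeg; case: (wdeg_vals u v P) => [|a s] [x]; first by [].
move=> _ /=; have [h1 h2] := bigmax_prop (a :: s) a.
split=> //; by move: h2; rewrite inE => /orP[/eqP ->|->]; rewrite ?inE ?eqxx.
Qed.

Lemma wdeg_eq (F : nzRingType) u v (P : {poly {poly F}}) m : P != 0 ->
  (exists i j : nat, (P`_j)`_i != 0 /\ m = u * i%:Z + v * j%:Z) ->
  (forall i j : nat, (P`_j)`_i != 0 -> u * i%:Z + v * j%:Z <= m) ->
  wdeg u v P = m.
Proof.
move=> nzP ex le; have [h1 h2] := @wdeg_spec F u v P nzP.
apply/eqP; rewrite eq_le; apply/andP; split.
- by move/mem_vals: h1 => [i [j [nz ->]]]; apply: le.
- by apply: h2; apply/mem_vals.
Qed.
Lemma card_lt (n k : nat) : (k <= n)%N -> #|[pred i : 'I_n | (i < k)%N]| = k.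
Proof.
move=> le; rewrite -[RHS]card_ord -(card_codom (f := widen_ord le) (fun a b h => val_inj (congr1 val h : val a = val b))).
apply: eq_card => i; rewrite inE; apply/idP/codomP.
- move=> lt; exists (Ordinal lt); exact: val_inj.
- by case=> j ->; rewrite /= (ltn_ord j).
Qed.

Lemma size_L (F : fieldType) n k (alpha : 'I_n -> F) : (k <= n)%N ->
  size (Lpoly k alpha) = k.+1.
Proof.
move=> le; rewrite /Lpoly size_prod; last by move=> i _; rewrite polyXsubC_eq0.
under eq_bigr => i _ do rewrite size_XsubC.
rewrite sum_nat_const card_lt //; lia.
Qed.

Lemma dvd_prod (F : fieldType) (r : seq F) m (p : {poly F}) : uniq r ->
  (forall z, z \in r -> ('X - z%:P)^+m %| p) -> \prod_(z <- r) ('X - z%:P)^+m %| p.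
Proof.
elim: r => [|x r IH] /=; first by rewrite big_nil dvd1p.
case/andP => xr ur h; rewrite big_cons Gauss_dvdp.
- rewrite h ?mem_head // IH // => z zr; apply: h; by rewrite inE zr orbT.
- rewrite prodrXl; apply/coprimep_expl/coprimep_expr.
  by rewrite coprimep_sym coprimep_XsubC root_prod_XsubC.
Qed.

Lemma dvd_shift (F : fieldType) (p : {poly F}) a m :
  (forall i, (i < m)%N -> (p \Po ('X + a%:P))`_i = 0) -> ('X - a%:P)^+m %| p.
Proof.
move=> h; set q := p \Po ('X + a%:P).
have hq : q = drop_poly m q * 'X^m.
  rewrite -{1}(poly_take_drop m q).
  suff -> : take_poly m q = 0 by rewrite add0r.
  by apply/polyP => i; rewrite coef_take_poly coef0; case: ifP => // /h.
have hp : p = q \Po ('X - a%:P).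
  by rewrite /q -comp_polyA comp_polyD comp_polyX comp_polyC subrK comp_polyXr.
by rewrite hp hq comp_polyM comp_Xn_poly dvdp_mull.
Qed.
Theorem lemma12 (F : finFieldType) (k n : nat)
  (hk : (1 <= k)%N) (hkn : (k < n)%N) (hnq : (n < #|F|)%N)
  (alpha w r : 'I_n -> F)
  (alpha_inj : injective alpha) (alpha_nz : forall i, alpha i != 0)
  (w_nz : forall i, w i != 0)
  (r0 : forall i : 'I_n, (i < k)%N -> r i = 0)
  (s l : nat) (hs : (0 < s)%N) (hsl : (s <= l)%N)
  (Q : {poly {poly F}}) (hQ : Q != 0) (hM : @in_M F n s l alpha w r Q) :
  wdeg 1 (k%:Z - 1) Q
  = wdeg 1 (-1) (@phi F s (@Lpoly F n k alpha) Q) + (s * k)%:Z.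
Proof.
move: hM => [hsz hmult].
set L := Lpoly k alpha.
have sL : size L = k.+1 := @size_L F n k alpha (ltnW hkn).
have L0 : L != 0 by rewrite -size_poly_eq0 sL.
have hdiv : forall j, L^+s %| Q`_j * L^+j.
  move=> j; case: (leqP s j) => hj.
  - by apply: dvdp_mull; apply: dvdp_exp2l.
  - rewrite -(subnK (ltnW hj)) exprD; apply: dvdp_mul => //.
    have := @dvd_prod F (map alpha (filter (fun i : 'I_n => (i < k)%N) (index_enum 'I_n))) (s - j) Q`_j.
    rewrite big_map big_filter prodrXl; apply.
    + by rewrite map_inj_uniq // filter_uniq // index_enum_uniq.
    + move=> z /mapP [i]; rewrite mem_filter => /andP[ik _] ->.
      apply: dvd_shift => i' hi'.
      have := hmult i i' j; rewrite r0 // mul0r /shiftXY (_ : (0:F)%:P%:P = 0); last by rewrite !raddf0.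
      rewrite addr0 comp_polyXr.
      rewrite coef_map_id0 ?comp_poly0 //; apply; lia.
have hphi : forall j, (phi s L Q)`_j * L^+s = Q`_j * L^+j.
  move=> j; rewrite /phi coef_poly; case: ifP => hj; first by rewrite divpK.
  by rewrite nth_default ?mul0r // leqNgt hj.
have sLe : forall m, size (L^+m) = (k * m).+1.
  move=> m; have := size_exp L m; rewrite sL /=.
  have : L^+m != 0 by rewrite expf_neq0.
  by rewrite -size_poly_eq0; case: (size (L ^+ m)) => [|t] //= _ ->.
have hsize : forall j, Q`_j != 0 ->
    (phi s L Q)`_j != 0 /\ addn (size (phi s L Q)`_j) (muln k s) = addn (size Q`_j) (muln k j).
  move=> j nzQ.
  have nzP : (phi s L Q)`_j != 0.
    apply/negP => /eqP h0; move: (hphi j); rewrite h0 mul0r => /esym/eqP.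
    by rewrite mulf_eq0 (negbTE nzQ) expf_eq0 (negbTE L0) andbF.
  split => //; have := congr1 (fun p : {poly F} => size p) (hphi j).
  rewrite !size_mul ?expf_neq0 // !sLe.
  have := size_poly_eq0 ((phi s L Q)`_j); have := size_poly_eq0 Q`_j.
  by rewrite (negbTE nzP) (negbTE nzQ); move=> _ _; rewrite !addnS.
set P := phi s L Q; rewrite -/P in hphi hsize.
set W := wdeg 1 (k%:Z - 1) Q.
have [hW1 hW2] := @wdeg_spec F 1 (k%:Z - 1) Q hQ.
have hkj : forall j : nat, (k%:Z - 1) * j%:Z = (muln k j)%:Z - j%:Z.
  by move=> j; rewrite mulrBl mul1r PoszM.
have lead : forall j, Q`_j != 0 -> (size Q`_j).-1%:Z + (k%:Z - 1) * j%:Z <= W.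
  move=> j nz; apply: hW2; apply/mem_vals; exists (size Q`_j).-1, j; split; last by rewrite mul1r.
  by rewrite -lead_coefE lead_coef_eq0.
move/mem_vals: hW1 => [i0 [j0 [nz0 eW]]]; rewrite -/W in eW.
have nzQ0 : Q`_j0 != 0 by apply: contraNneq nz0 => ->; rewrite coef0.
have lt0 : leq i0.+1 (size Q`_j0).
  by rewrite ltnNge; apply: contra nz0 => h; rewrite nth_default.
have [nzP0 hs0] := hsize j0 nzQ0.
have nzP : P != 0 by apply: contraNneq nzP0 => ->; rewrite coef0.
rewrite (@wdeg_eq F 1 (-1) P (W - (s * k)%:Z) nzP); first by rewrite subrK.
- exists (size P`_j0).-1, j0; split; first by rewrite -lead_coefE lead_coef_eq0.
  have := lead j0 nzQ0; move: eW; rewrite !hkj !mul1r.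
  have := size_poly_gt0 P`_j0; rewrite nzP0.
  move: hs0 lt0; rewrite PoszM; lia.
- move=> i j nz.
  have nzPj : P`_j != 0 by apply: contraNneq nz => ->; rewrite coef0.
  have nzQj : Q`_j != 0.
    apply: contraNneq nzPj => h0; move: (hphi j); rewrite h0 mul0r => /eqP.
    by rewrite mulf_eq0 expf_eq0 (negbTE L0) andbF orbF.
  have lt : leq i.+1 (size P`_j).
    by rewrite ltnNge; apply: contra nz => h; rewrite nth_default.
  have [_ hsj] := hsize j nzQj.
  have := lead j nzQj; rewrite !hkj !mul1r.
  move: hsj lt; rewrite PoszM; lia.
Qed.
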